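(* There exist a metric space $(\mathcal X,d)$, a set of candidate locations $\mathcal C\subseteq\mathcal X$ and a number of facilities $\ell$ such that for every $n$, every $k<n$ and every panel decision function $\widetilde q:\mathcal X^k\to\mathcal C^\ell$, there exist agent locations $x_1,\dots,x_n\in\mathcal X$ such that for every $\rho>1$, $$\mathbb E_{S\sim\mathcal U_{k,n}}\big[\textsc{Social-Cost}(\widetilde q(S))\big]>\rho\cdot\textsc{Social-Opt}.$$
   Context: For $y=(y_1,\dots,y_\ell)\in\mathcal C^\ell$, agent $i$'s cost is $\mathrm{Cost}_i(y)=\min_{j\in[\ell]}d(x_i,y_j)$; $\textsc{Social-Cost}(y)=\frac1n\sum_{i=1}^n\mathrm{Cost}_i(y)$ and $\textsc{Social-Opt}=\min_{y\in\mathcal C^\ell}\textsc{Social-Cost}(y)$. For a panel $S\subseteq[n]$ of size $k$, $\widetilde q(S)$ denotes $\widetilde q$ applied to $(x_i)_{i\in S}$. $\mathcal U_{k,n}$ is the uniform distribution over size-$k$ subsets of $[n]$. *)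

(* Defs.v *)
From Stdlib Require Import Reals.
From mathcomp Require Import all_boot all_order all_algebra.
From mathcomp Require Import Rstruct.
Set Implicit Arguments. Unset Strict Implicit. Unset Printing Implicit Defensive.
Import Order.TTheory GRing.Theory Num.Theory.
Local Open Scope ring_scope.

Definition is_metric (X : Type) (d : X -> X -> R) : Prop :=
  (forall x y, 0 <= d x y) /\
  (forall x y, d x y = 0 <-> x = y) /\
  (forall x y, d x y = d y x) /\
  (forall x y z, d x z <= d x y + d y z).

(* A facility profile y = (y_1,...,y_l) with l = l'.+1 >= 1 facilities. *)
Definition cost (X : Type) (d : X -> X -> R) (l' : nat)
  (xi : X) (y : 'I_l'.+1 -> X) : R :=
  \big[Num.min/d xi (y ord0)]_(j < l'.+1) d xi (y j).

Definition social_cost (X : Type) (d : X -> X -> R) (l' n : nat)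
  (x : 'I_n -> X) (y : 'I_l'.+1 -> X) : R :=
  (\sum_(i < n) cost d (x i) y) / n%:R.

Definition in_cands (X : Type) (C : X -> Prop) (l' : nat) (y : 'I_l'.+1 -> X) : Prop :=
  forall j, C (y j).

Definition is_social_opt (X : Type) (d : X -> X -> R) (C : X -> Prop) (l' n : nat)
  (x : 'I_n -> X) (o : R) : Prop :=
  (exists y : 'I_l'.+1 -> X, in_cands C y /\ social_cost d x y = o) /\
  (forall y : 'I_l'.+1 -> X, in_cands C y -> o <= social_cost d x y).

(* The profile (x_i)_{i in S}, listed in increasing order of the index i,
   as a k-tuple; x0 is an irrelevant default (used only when #|S| <> k). *)
Definition panel (X : Type) (x0 : X) (n k : nat) (x : 'I_n -> X)
  (S : {set 'I_n}) : 'I_k -> X :=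
  fun i => nth x0 [seq x j | j <- enum S] i.

Definition expected_panel_cost (X : Type) (d : X -> X -> R) (x0 : X) (l' n k : nat)
  (q : ('I_k -> X) -> ('I_l'.+1 -> X)) (x : 'I_n -> X) : R :=
  (\sum_(S : {set 'I_n} | #|S| == k) social_cost d x (q (panel x0 x S)))
  / #|[set S : {set 'I_n} | #|S| == k]|%:R.
Arguments is_social_opt {X} d C l' {n} x o.

(* Main.v *)
Require Import Defs.
From Stdlib Require Import Reals.
From mathcomp Require Import all_boot all_order all_algebra.
From mathcomp Require Import Rstruct.
From Stdlib Require Import FunctionalExtensionality.
Import Order.TTheory GRing.Theory Num.Theory.
Local Open Scope ring_scope.

Definition dd (a b : nat) : R := if a == b then 0 else 1.

Lemma dd_metric : is_metric dd.
Proof.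
rewrite /dd; split; [|split; [|split]].
- by move=> x y; case: eqP.
- move=> x y; case: eqP => [->|Hxy]; first by [].
  split=> // H; exfalso; move: H; apply/eqP; exact: oner_neq0.
- by move=> x y; rewrite eq_sym.
- move=> x y z; case: (eqVneq x y) => [E|_]; first by subst; rewrite ?eqxx add0r.
  case: (eqVneq y z) => [E|_]; first by subst; rewrite ?eqxx addr0; case: eqP => _; rewrite ?ler01 ?lexx.
  case: eqP => _; last by rewrite lerDl ler01.
  by rewrite addr_ge0 ?ler01.
Qed.

Lemma cost_ge0 l' xi (y : 'I_l'.+1 -> nat) : 0 <= cost dd xi y.
Proof.
rewrite /cost; apply: (big_ind (fun v => 0 <= v)).
- by case: (dd_metric) => H _; apply: H.
- by move=> a b Ha Hb; rewrite le_min Ha Hb.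
- by move=> j _; case: (dd_metric) => H _; apply: H.
Qed.

Lemma cost_le l' xi (y : 'I_l'.+1 -> nat) j : cost dd xi y <= dd xi (y j).
Proof. by rewrite /cost (bigD1 j) //= ge_min lexx. Qed.

Lemma cost_one l' xi (y : 'I_l'.+1 -> nat) : (forall j, xi != y j) -> cost dd xi y = 1.
Proof.
move=> H; rewrite /cost; apply: (big_ind (fun v => v = 1)).
- by rewrite /dd (negbTE (H ord0)).
- by move=> a b -> ->; rewrite minxx.
- by move=> j _; rewrite /dd (negbTE (H j)).
Qed.

Lemma sc_ge0 l' n (x : 'I_n -> nat) (y : 'I_l'.+1 -> nat) : 0 <= social_cost dd x y.
Proof.
rewrite /social_cost RdivE; apply: divr_ge0; last exact: ler0n.
by apply: sumr_ge0 => i _; apply: cost_ge0.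
Qed.

Lemma nth_all0 (s : seq nat) i : all (pred1 0%N) s -> nth 0%N s i = 0%N.
Proof. elim: s i => [|a s IH] [|i] //= /andP[/eqP Ha H] //; exact: IH. Qed.

Theorem theorem4p15 :
  exists (X : Type) (d : X -> X -> R) (C : X -> Prop) (l' : nat) (c0 : X),
    is_metric d /\ C c0 /\
    forall (n k : nat), (k < n)%N ->
    forall q : ('I_k -> X) -> ('I_l'.+1 -> X),
      (forall p, in_cands C (q p)) ->
      exists x : 'I_n -> X,
        exists opt : R, is_social_opt d C l' x opt /\
        forall rho : R, 1 < rho ->
          expected_panel_cost d c0 q x > rho * opt.
Proof.
exists nat, dd, (fun _ => True), 1%N, 0%N.
split; first exact: dd_metric.
split=> // n k Hkn q _.
set y := q (fun _ => 0%N).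
set b := (y ord0 + y ord_max).+1.
have Hb : forall j, b != y j.
  move=> [[|[|m]] Hj] //.
  - have -> : Ordinal Hj = ord0 by apply: val_inj.
    by rewrite /b neq_ltn ltnS leq_addr orbT.
  - have -> : Ordinal Hj = ord_max by apply: val_inj.
    by rewrite /b neq_ltn ltnS leq_addl orbT.
have Hb0 : (b != 0)%N by [].
exists (fun i : 'I_n => if val i == k then b else 0%N), 0%R.
have Hn : (0 < n)%N by apply: leq_ltn_trans Hkn.
split.
  split; last by move=> z _; apply: sc_ge0.
  exists (fun j : 'I_2 => if j == ord0 then 0%N else b); split => //.
  rewrite /social_cost RdivE big1; first by rewrite mul0r.
  move=> i _.
  apply/eqP; rewrite eq_le cost_ge0 andbT.
  case: eqP => _.
    by apply: (le_trans (cost_le _ _ _ ord_max)); rewrite /dd /= ?eqxx.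
  by apply: (le_trans (cost_le _ _ _ ord0)); rewrite /dd /= ?eqxx.
move=> rho _; rewrite mulr0 /expected_panel_cost RdivE.
have Hkn' : (k <= n)%N by apply: ltnW.
set S0 := [set widen_ord Hkn' i | i : 'I_k].
have cS0 : #|S0| = k.
  rewrite card_imset ?card_ord // => a a' /(congr1 val) /= H; exact: val_inj.
have pS0 : @panel nat 0%N n k (fun i : 'I_n => if val i == k then b else 0%N) S0 = (fun _ => 0%N).
  apply: functional_extensionality => i; rewrite /panel; apply: nth_all0.
  apply/allP => z /mapP [j]; rewrite mem_enum => /imsetP [j' _ ->] ->.
  by rewrite /= (ltn_eqF (ltn_ord j')).
apply: divr_gt0; last first.
  rewrite ltr0n card_gt0; apply/set0Pn; exists S0; rewrite inE cS0 //.
rewrite (bigD1 S0) ?cS0 //=.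
apply: ltr_wpDr; first by apply: sumr_ge0 => S _; apply: sc_ge0.
rewrite pS0 -/y /social_cost RdivE; apply: divr_gt0; last by rewrite ltr0n.
rewrite (bigD1 (Ordinal Hkn)) //.
apply: ltr_wpDr; first by apply: sumr_ge0 => i _; apply: cost_ge0.
have E : ((Ordinal Hkn : nat) == k) = true := eqxx k.
rewrite E.
have C1 : cost dd b y = 1 by apply: cost_one.
rewrite C1.
exact: ltr01.
Qed.
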